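(* Let $\Delta$ be a $d$-dimensional pure simplicial forest. Then for every $i<d$, the $(i,d)$-incidence complex $H_\Delta(i,d)$ of $\Delta$ is a simplicial forest.
   Context: A facet $F$ of a simplicial complex $\Delta$ is a leaf if either $F$ is the only facet, or there is a facet $G\neq F$ with $F\cap F'\subseteq F\cap G$ for every facet $F'\neq F$. $\Delta$ is a simplicial tree if it is connected and every subcomplex generated by a nonempty subset of its facets has a leaf; a simplicial forest if each connected component is a simplicial tree. $\Delta$ is pure if all facets have the same dimension. The $(i,j)$-incidence complex $H_\Delta(i,j)$ is the simplicial complex whose vertex set is the set of $i$-dimensional faces of $\Delta$, and whose facets are exactly the sets of the form $\{\tau:\tau\subset\sigma,\ \dim\tau=i\}$ for $\sigma$ a $j$-dimensional face of $\Delta$. *)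

(* Defs.v *)
From mathcomp Require Import all_boot.
Set Implicit Arguments. Unset Strict Implicit. Unset Printing Implicit Defensive.

(* A (finite) simplicial complex on the vertex type U is represented by its
   set of facets fs : {set {set U}} (the faces are the subsets of facets).
   A face of cardinality k has dimension k-1. *)

Section SimplicialComplexes.
Variable U : finType.

Definition facet_antichain (fs : {set {set U}}) : Prop :=
  forall F G, F \in fs -> G \in fs -> F \subset G -> F = G.

Definition is_leaf (fs : {set {set U}}) (F : {set U}) : bool :=
  (F \in fs) &&
  ((fs == [set F]) ||
   [exists G in fs, (G != F) &&
      [forall F' in fs, (F' != F) ==> (F :&: F' \subset F :&: G)]]).

Definition facet_adj (fs : {set {set U}}) : rel {set U} :=
  fun F G => [&& F \in fs, G \in fs & F :&: G != set0].

Definition sc_connected (fs : {set {set U}}) : Prop :=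
  forall F G, F \in fs -> G \in fs -> connect (facet_adj fs) F G.

Definition simplicial_tree (fs : {set {set U}}) : Prop :=
  sc_connected fs /\
  forall C : {set {set U}}, C \subset fs -> C != set0 ->
    exists F, is_leaf C F.

Definition component (fs : {set {set U}}) (F : {set U}) : {set {set U}} :=
  [set G in fs | connect (facet_adj fs) F G].

Definition simplicial_forest (fs : {set {set U}}) : Prop :=
  forall F, F \in fs -> simplicial_tree (component fs F).

Definition pure_dim (fs : {set {set U}}) (d : nat) : Prop :=
  forall F, F \in fs -> #|F| = d.+1.

Definition faces_of_dim (fs : {set {set U}}) (j : nat) : {set {set U}} :=
  [set s : {set U} | (#|s| == j.+1) && [exists F in fs, s \subset F]].

Definition incidence_complex (fs : {set {set U}}) (i j : nat)
  : {set {set {set U}}} :=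
  [set [set t : {set U} | (t \subset s) && (#|t| == i.+1)]
     | s : {set U} in faces_of_dim fs j].

End SimplicialComplexes.

(* Main.v *)
Require Import Defs.
From mathcomp Require Import all_boot.
From mathcomp Require Import zify.

Lemma connect_map_aux (A B : finType) (e : rel A) (e2 : rel B) (f : A -> B) :
  (forall x y, e x y -> e2 (f x) (f y)) ->
  forall x y, connect e x y -> connect e2 (f x) (f y).
Proof.
move=> h x y /connectP [p pp ->] {y}.
elim: p x pp => [|z p IH] x /=; first by rewrite connect0.
case/andP=> exz pz.
exact: connect_trans (connect1 (h _ _ exz)) (IH _ pz).
Qed.

Lemma adj_sym_aux (U : finType) (fs : {set {set U}}) : symmetric (facet_adj fs).
Proof. by move=> F G; rewrite /facet_adj setIC andbCA. Qed.

Lemma comp_connected_aux (U : finType) (fs : {set {set U}}) F :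
  F \in fs -> sc_connected (component fs F).
Proof.
move=> Ffs.
set C := component fs F.
have key: forall p x, connect (facet_adj fs) F x -> path (facet_adj fs) x p ->
    connect (facet_adj C) x (last x p).
  elim=> [|z p IH] x /=; first by rewrite connect0.
  move=> cFx /andP[exz pz].
  have cFz : connect (facet_adj fs) F z := connect_trans cFx (connect1 exz).
  apply: connect_trans (IH z cFz pz). apply: connect1.
  move: exz; rewrite /facet_adj /C /component !inE => /and3P[-> -> ->].
  by rewrite cFx cFz.
have hF : forall G, G \in C -> connect (facet_adj C) F G.
  move=> G; rewrite inE => /andP[_ /connectP[p pp ->]].
  by apply: key => //; exact: connect0.
move=> G H GC HC. apply: connect_trans (hF H HC).
rewrite (sym_connect_sym (@adj_sym_aux U C) G F); exact: hF.
Qed.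

Section Main.
Variables (T : finType) (fs : {set {set T}}) (d i : nat).
Hypothesis pure : pure_dim fs d.
Hypothesis ilt : i < d.

Let S (F : {set T}) := [set t : {set T} | (t \subset F) && (#|t| == i.+1)].

Lemma inH_aux Y : Y \in incidence_complex fs i d -> exists2 F, F \in fs & Y = S F.
Proof.
rewrite /incidence_complex => /imsetP[s]; rewrite inE.
move=> /andP[/eqP cs /existsP[F /andP[Ffs sF]]] ->.
exists F => //.
have: s == F by rewrite eqEcard sF (pure _ Ffs) cs leqnn.
by move/eqP->.
Qed.

Lemma coverS_aux F : F \in fs -> cover (S F) = F.
Proof.
move=> Ffs; apply/setP=> x; apply/bigcupP/idP.
  by case=> t; rewrite inE => /andP[tF _] xt; exact: (subsetP tF).
move=> xF.
have cD : #|F :\ x| = d.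
  have := cardsD1 x F; rewrite xF (pure _ Ffs) /=; lia.
have : 0 < #|[set B : {set T} | B \subset F :\ x & #|B| == i]|.
  by rewrite cards_draws bin_gt0 cD ltnW.
case/card_gt0P => B; rewrite inE => /andP[BF /eqP cB].
exists (x |: B); last by rewrite setU11.
rewrite inE subUset sub1set xF (subset_trans BF (subD1set F x)) /=.
have xB : x \notin B.
  by apply/negP => /(subsetP BF); rewrite !inE eqxx.
by rewrite cardsU1 xB cB.
Qed.

Lemma adjmap_aux Y Z : facet_adj (incidence_complex fs i d) Y Z ->
  facet_adj fs (cover Y) (cover Z).
Proof.
case/and3P => /inH_aux[F Ffs ->] /inH_aux[G Gfs ->] /set0Pn[t].
rewrite !coverS_aux // !inE => /andP[/andP[tF /eqP ct] /andP[tG _]].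
rewrite /facet_adj Ffs Gfs /=.
have: 0 < #|t| by rewrite ct.
case/card_gt0P => x xt; apply/set0Pn; exists x.
by rewrite inE (subsetP tF) ?(subsetP tG).
Qed.

End Main.

Theorem proposition4p6 (T : finType) (fs : {set {set T}}) (d i : nat) :
  facet_antichain fs ->
  fs != set0 ->
  pure_dim fs d ->
  simplicial_forest fs ->
  i < d ->
  simplicial_forest (incidence_complex fs i d).
Proof.
move=> _ _ pure forest ilt.
set S := fun F : {set T} => [set t : {set T} | (t \subset F) && (#|t| == i.+1)].
move=> X XH; split; first exact: comp_connected_aux.
move=> C' sub nz.
have [F0 F0fs eX] := @inH_aux T fs d i pure _ XH.
have memC : forall Y, Y \in C' -> Y = S (cover Y) /\ cover Y \in component fs F0.
  move=> Y YC. have := subsetP sub Y YC. rewrite inE => /andP[YH cXY].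
  have [G Gfs eY] := @inH_aux T fs d i pure _ YH.
  have := @connect_map_aux _ _ _ _ cover (@adjmap_aux T fs d i pure ilt) _ _ cXY.
  rewrite eY eX !(@coverS_aux T fs d i pure ilt) // => cG.
  by split=> //; rewrite inE Gfs.
set D := [set G in component fs F0 | S G \in C'].
case/set0Pn: (nz) => Y YC. have [eY cY] := memC Y YC.
have DnZ : D != set0 by apply/set0Pn; exists (cover Y); rewrite inE cY -eY YC.
have [_ lf] := forest F0 F0fs.
have DC : D \subset component fs F0 by apply/subsetP=> G; rewrite inE => /andP[].
have [F] := lf D DC DnZ.
rewrite /is_leaf => /andP[FD].
have := FD; rewrite inE => /andP[Fc SFC].
have Ffs : F \in fs by move: Fc; rewrite inE => /andP[].
case/orP => [/eqP DF | /existsP[G /andP[GD /andP[GF /forallP hall]]]].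
  exists (S F); rewrite /is_leaf SFC /=; apply/orP; left.
  apply/eqP/setP => Y'; rewrite inE; apply/idP/eqP => [Y'C | ->//].
  have [e c] := memC Y' Y'C.
  have : cover Y' \in D by rewrite inE c -e.
  by rewrite DF inE => /eqP h; rewrite e h.
exists (S F); rewrite /is_leaf SFC /=; apply/orP; right.
have := GD; rewrite inE => /andP[Gc SGC].
have Gfs : G \in fs by move: Gc; rewrite inE => /andP[].
apply/existsP; exists (S G); rewrite SGC /=; apply/andP; split.
  apply: contra GF => /eqP h; apply/eqP.
  have := congr1 cover h; rewrite /S (@coverS_aux T fs d i pure ilt _ Gfs) (@coverS_aux T fs d i pure ilt _ Ffs) => ->; done.
apply/forallP => Y'; apply/implyP => Y'C; apply/implyP => neq.
have [e c] := memC Y' Y'C.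
have F'D : cover Y' \in D by rewrite inE c -e.
have := hall (cover Y'); rewrite F'D /=.
have -> : cover Y' != F.
  by apply: contra neq => /eqP h; rewrite e h.
move=> /= sub'.
rewrite e; apply/subsetP=> t; rewrite !inE => /andP[/andP[tF ct] /andP[tF' _]].
rewrite tF ct /=.
have : t \subset F :&: cover Y' by rewrite subsetI tF tF'.
by move/subset_trans/(_ sub'); rewrite subsetI => /andP[_ ->].
Qed.
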